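(* Let $\alpha_1,\ldots,\alpha_N,\beta_1,\ldots,\beta_N>0$ and let $\langle A\rangle$ be the $N\times N$ matrix with entries $\langle A_{ij}\rangle=\dfrac{\alpha_i\beta_j}{1+\alpha_i\beta_j}$. (1) If $0<\alpha_i\beta_j<1$ for all $i,j\in\{1,\ldots,N\}$, then $\langle A\rangle=\sum_{k=1}^\infty L_k$ (a convergent series), where each $L_k$ is a rank-one $N\times N$ matrix whose only nonzero singular value is \[\ell_k=\sqrt{\sum_{i,j=1}^N(\alpha_i\beta_j)^{2k}}.\] (2) If $\alpha_i\beta_j>1$ for all $i,j\in\{1,\ldots,N\}$, then $\langle A\rangle=N\,\hat{\bm 1}\hat{\bm 1}^\top+\sum_{k=1}^\infty M_k$ (a convergent series), where $\hat{\bm 1}=(1,\ldots,1)^\top/\sqrt N$ and each $M_k$ is a rank-one $N\times N$ matrix whose only nonzero singular value is \[m_k=\sqrt{\sum_{i,j=1}^N(\alpha_i\beta_j)^{-2k}}.\]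
   Context: $\langle A\rangle$ is the expected adjacency matrix of the directed soft configuration model; no further structure is needed beyond the displayed entry formula. *)

(* Defs.v *)
From HB Require Import structures.
From mathcomp Require Import all_boot all_order all_algebra.
From mathcomp Require Import all_classical all_reals all_analysis.
Set Implicit Arguments. Unset Strict Implicit. Unset Printing Implicit Defensive.
Import Order.TTheory GRing.Theory Num.Theory.
Local Open Scope ring_scope.

Definition expA (R : realType) (N : nat) (a b : 'I_N -> R) : 'M[R]_N :=
  \matrix_(i, j) (a i * b j / (1 + a i * b j)).

Definition singular_value (R : realType) (m n : nat) (M : 'M[R]_(m, n)) (s : R) : Prop :=
  0 <= s /\ eigenvalue (M^T *m M) (s ^+ 2).

Definition rank_one_sv (R : realType) (m n : nat) (M : 'M[R]_(m, n)) (s : R) : Prop :=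
  \rank M = 1%N /\ 0 < s /\ (forall t, 0 < t -> singular_value M t <-> t = s).

(* Main.v *)
Require Import Defs.
From HB Require Import structures.
From mathcomp Require Import all_boot all_order all_algebra.
From mathcomp Require Import all_classical all_reals all_analysis.
From mathcomp Require Import ring.
Import Order.TTheory GRing.Theory Num.Theory.
Import numFieldNormedType.Exports.
Local Open Scope classical_set_scope.
Local Open Scope ring_scope.

Section R1.
Variable (R : realType) (N : nat) (u v : 'I_N -> R).
Hypothesis hN : (0 < N)%N.
Hypothesis hu : forall i, u i != 0.
Hypothesis hv : forall i, v i != 0.

Let cu : 'cV[R]_N := \col_i u i.
Let cv : 'cV[R]_N := \col_i v i.

Lemma ctc (w : 'I_N -> R) : (\col_i w i)^T *m (\col_i w i) = (\sum_i w i ^+ 2)%:M.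
Proof.
apply/matrixP => a b; rewrite !ord1 !mxE; apply: eq_bigr => i _.
by rewrite !mxE expr2.
Qed.

Lemma r1_entry i j : (cu *m cv^T) i j = u i * v j.
Proof. by rewrite !mxE big_ord1 !mxE. Qed.

Lemma r1_sv : rank_one_sv (cu *m cv^T) (Num.sqrt (\sum_i \sum_j (u i * v j) ^+ 2)).
Proof.
set i0 : 'I_N := Ordinal hN.
set c := \sum_i u i ^+ 2.
set d := \sum_i v i ^+ 2.
have cpos : 0 < c.
  rewrite /c (bigD1 i0) //=; apply: ltr_pwDl; first by rewrite lt_neqAle eq_sym sqrf_eq0 hu sqr_ge0.
  by apply: sumr_ge0 => i _; exact: sqr_ge0.
have dpos : 0 < d.
  rewrite /d (bigD1 i0) //=; apply: ltr_pwDl; first by rewrite lt_neqAle eq_sym sqrf_eq0 hv sqr_ge0.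
  by apply: sumr_ge0 => i _; exact: sqr_ge0.
have sumE : \sum_i \sum_j (u i * v j) ^+ 2 = c * d.
  rewrite /c mulr_suml; apply: eq_bigr => i _.
  rewrite mulr_sumr; apply: eq_bigr => j _; by rewrite exprMn.
rewrite sumE.
have MtM : (cu *m cv^T)^T *m (cu *m cv^T) = c *: (cv *m cv^T).
  rewrite trmx_mul trmxK mulmxA -(mulmxA cv) ctc mul_mx_scalar.
  by rewrite -scalemxAl.
have cvT0 : cv^T != 0.
  apply/negP => /eqP/matrixP/(_ 0 i0); rewrite !mxE => /eqP; exact/negP/hv.
split.
  apply/eqP; rewrite eqn_leq; apply/andP; split.
    by apply: leq_trans (mxrankM_maxl _ _) (rank_leq_col _).
  rewrite lt0n mxrank_eq0; apply/negP => /eqP/matrixP/(_ i0 i0).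
  rewrite r1_entry mxE => /eqP; rewrite mulf_eq0.
  by rewrite (negbTE (hu _)) (negbTE (hv _)).
have cdpos : 0 < c * d by rewrite mulr_gt0.
split; first by rewrite sqrtr_gt0.
move=> t tpos; split.
  move=> [_ /eigenvalueP [w]]; rewrite MtM => Hw w0.
  have e1 : w *m (c *: (cv *m cv^T)) = (c * (w *m cv) 0 0) *: cv^T.
    rewrite -scalemxAr mulmxA. rewrite {1}[w *m cv]mx11_scalar. rewrite mul_scalar_mx scalerA.
  reflexivity.
  rewrite e1 in Hw.
  have e2 := congr1 (fun A => (A *m cv) 0 0) Hw; move: e2 => /=.
  rewrite -!scalemxAl ctc [w *m cv]mx11_scalar.
  move: Hw; set e := (w *m cv) 0 0 => Hw.
  rewrite !mxE /= !mulr1n.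
  have e0 : e != 0.
    apply/negP => /eqP e0; move: Hw; rewrite e0 mulr0 scale0r => /eqP.
    rewrite eq_sym scaler_eq0 (negbTE w0) orbF sqrf_eq0 => /eqP t0.
    by move: tpos; rewrite t0 ltxx.
  move=> H.
  have : t ^+ 2 = c * d.
    by apply: (mulIf e0); rewrite -H -/d mulrAC.
  move=> <-; rewrite sqrtr_sqr gtr0_norm //.
move=> ->; split; first exact: sqrtr_ge0.
apply/eigenvalueP; exists cv^T => //.
rewrite MtM sqr_sqrtr ?ltW // -scalemxAr mulmxA ctc mul_scalar_mx scalerA.
by [].
Qed.
End R1.


Lemma sqr_signM (R : realType) (m : nat) (y : R) : ((-1) ^+ m * y) ^+ 2 = y ^+ 2.
Proof. by rewrite exprMn -exprM mulnC exprM expr2 mulN1r opprK expr1n mul1r. Qed.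

Lemma mxDE (R : realType) (N : nat) (A B : 'M[R]_N) i j : (A + B) i j = A i j + B i j.
Proof. by rewrite mxE. Qed.

Lemma mxZE (R : realType) (N : nat) (a : R) (A : 'M[R]_N) i j : (a *: A) i j = a * A i j.
Proof. by rewrite mxE. Qed.

Lemma sumN_helper (R : realType) (n : nat) (f g : nat -> R) :
  (forall k, f k = - g k) -> \sum_(1 <= k < n) f k = - \sum_(1 <= k < n) g k.
Proof. by move=> H; rewrite -sumrN; apply: eq_bigr => k _; rewrite H. Qed.

Lemma inv_helper (R : realType) (x : R) : 0 < x -> x / (1 + x) = 1 - x^-1 / (1 + x^-1).
Proof.
move=> x0.
have x1 : 1 + x != 0 by rewrite gt_eqF // ltr_wpDl.
have x2 : 1 + x^-1 != 0 by rewrite gt_eqF // ltr_wpDl // invr_gt0.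
have x3 : x != 0 by rewrite gt_eqF.
field; by rewrite x3 addrC x1.
Qed.

Lemma alt_psum (R : realType) (x : R) (n : nat) : 0 < x ->
  \sum_(1 <= k < n.+1) (-1) ^+ k.+1 * x ^+ k = x / (1 + x) * (1 - (-x) ^+ n).
Proof.
move=> x0; have x1 : 1 + x != 0 by rewrite gt_eqF // ltr_wpDl.
elim: n => [|n IH]; first by rewrite big_geq // expr0 subrr mulr0.
rewrite big_nat_recr //= IH ![(-x) ^+ _]exprNn !exprS.
by field.
Qed.

Lemma alt_cvg (R : realType) (x : R) : 0 < x -> x < 1 ->
  (fun n => \sum_(1 <= k < n) (-1) ^+ k.+1 * x ^+ k) @ \oo --> x / (1 + x).
Proof.
move=> x0 x1; rewrite -cvg_shiftS.
rewrite (@eq_cvg _ _ _ _ (fun n => x / (1 + x) * (1 - (-x) ^+ n))); last first.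
  by move=> n /=; rewrite alt_psum.
suff H : (fun n => x / (1 + x) * (1 - (-x) ^+ n)) @ \oo --> x / (1 + x) * (1 - 0).
  by rewrite subr0 mulr1 in H.
apply: cvgM; first exact: cvg_cst.
apply: cvgB; first exact: cvg_cst.
apply: cvg_expr; rewrite normrN gtr0_norm //.
Qed.

Theorem lemmaS30 (R : realType) (N : nat) (alpha beta : 'I_N -> R)
  (hN : (0 < N)%N) (ha : forall i, 0 < alpha i) (hb : forall j, 0 < beta j) :
  ((forall i j, alpha i * beta j < 1) ->
    exists L : nat -> 'M[R]_N,
      (forall k, (0 < k)%N ->
         rank_one_sv (L k)
           (Num.sqrt (\sum_i \sum_j (alpha i * beta j) ^+ (2 * k)))) /\
      (forall i j, (fun n => (\sum_(1 <= k < n) L k) i j) @ \oo --> expA alpha beta i j)) /\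
  ((forall i j, 1 < alpha i * beta j) ->
    exists M : nat -> 'M[R]_N,
      (forall k, (0 < k)%N ->
         rank_one_sv (M k)
           (Num.sqrt (\sum_i \sum_j ((alpha i * beta j)^-1) ^+ (2 * k)))) /\
      (forall i j, (fun n => (N%:R *: ((const_mx (Num.sqrt N%:R)^-1 : 'cV[R]_N)
                           *m (const_mx (Num.sqrt N%:R)^-1 : 'cV[R]_N)^T)
                 + \sum_(1 <= k < n) M k) i j) @ \oo --> expA alpha beta i j)).
Proof.
split.
  move=> hlt.
  exists (fun k => (\col_i ((-1) ^+ k.+1 * alpha i ^+ k)) *m (\col_j (beta j ^+ k))^T).
  split.
    move=> k _.
    have -> : \sum_i \sum_j (alpha i * beta j) ^+ (2 * k) =
      \sum_i \sum_j ((-1) ^+ k.+1 * alpha i ^+ k * beta j ^+ k) ^+ 2.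
      apply: eq_bigr => i _; apply: eq_bigr => j _.
      by rewrite -mulrA sqr_signM -exprMn mulnC exprM.
    apply: r1_sv => //.
      by move=> i; rewrite mulf_neq0 ?signr_eq0 // expf_neq0 // gt_eqF.
    by move=> j; rewrite expf_neq0 // gt_eqF.
  move=> i j.
  rewrite (@eq_cvg _ _ _ _ (fun n => \sum_(1 <= k < n) (-1) ^+ k.+1 * (alpha i * beta j) ^+ k)); last first.
    move=> n /=; rewrite summxE; apply: eq_bigr => k _.
    by rewrite r1_entry exprMn mulrA.
  have -> : expA alpha beta i j = alpha i * beta j / (1 + alpha i * beta j) by rewrite /expA mxE.
  apply: alt_cvg; first by rewrite mulr_gt0.
  exact: hlt.
move=> hgt.
exists (fun k => (\col_i ((-1) ^+ k * (alpha i)^-1 ^+ k)) *m (\col_j ((beta j)^-1 ^+ k))^T).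
split.
  move=> k _.
  have -> : \sum_i \sum_j ((alpha i * beta j)^-1) ^+ (2 * k) =
    \sum_i \sum_j ((-1) ^+ k * (alpha i)^-1 ^+ k * (beta j)^-1 ^+ k) ^+ 2.
    apply: eq_bigr => i _; apply: eq_bigr => j _.
    rewrite invfM.
    by rewrite -mulrA sqr_signM -exprMn mulnC exprM.
  apply: r1_sv => //.
    by move=> i; rewrite mulf_neq0 ?signr_eq0 // expf_neq0 // invr_eq0 gt_eqF.
  by move=> j; rewrite expf_neq0 // invr_eq0 gt_eqF.
move=> i j.
set x := alpha i * beta j.
have x0 : 0 < x by rewrite mulr_gt0.
have y0 : 0 < x^-1 by rewrite invr_gt0.
have y1 : x^-1 < 1 by rewrite invf_lt1 //; exact: hgt.
rewrite (@eq_cvg _ _ _ _ (fun n => 1 - \sum_(1 <= k < n) (-1) ^+ k.+1 * (x^-1) ^+ k)); last first.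
  move=> n /=; rewrite mxDE summxE; congr (_ + _).
    rewrite mxZE !mxE big_ord1 !mxE -expr2 exprVn sqr_sqrtr ?ler0n //.
    have hN0 : (N%:R : R) != 0 by rewrite pnatr_eq0 -lt0n.
    have h := divff hN0; exact h.
  apply: sumN_helper => k.
  by rewrite r1_entry /x invfM exprMn mulrA exprS mulN1r !mulNr opprK.
have H := cvgB (cvg_cst (1 : R)) (@alt_cvg _ _ y0 y1).
have -> : expA alpha beta i j = 1 - x^-1 / (1 + x^-1).
  rewrite /expA mxE -/x.
  exact (@inv_helper _ _ x0).
apply: H.
Qed.
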